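(* The scalar curvature $r=\langle G,{\rm Ric}\rangle_{\mathcal{B}}$ is constant, given by \[ r=\frac{[2]_q}{q^2+q^{-2}}(q^{-6}+q^6)=[2]_q(1+(q^{-2}-q^2)^2), \] and as $q\to 1$ the scalar curvature converges to 2.
   Context: $\mathcal{B}=\mathcal{O}(S^2_q)$, $q\in(0,1]$, $[x]_q=\frac{q^{-x}-q^x}{q^{-1}-q}$. With the exact frame $\omega_j=(-1)^{1-j}\begin{pmatrix}0&q^{1/2}(t^1_{2-j,-1})^*\\ q^{-1/2}(t^1_{2-j,1})^*&0\end{pmatrix}$ ($j=1,2,3$) of the one-forms of the Dabrowski--Sitarz spectral triple, right inner product $\langle\rho,\eta\rangle_{\mathcal{B}}=\mathrm{Tr}(\mathrm{diag}(q,q^{-1})\rho^*\eta)$ and line element $G=\sum_j\omega_j\otimes\omega_j^\dagger$, the Ricci curvature of the Levi-Civita connection is ${\rm Ric}=\frac{[2]_q}{q^2+q^{-2}}\,\omega_i\otimes\mathrm{diag}(q^{-4},q^4)\,\omega_i^\dagger$. *)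

(* Defs.v *)
From HB Require Import structures.
From mathcomp Require Import all_boot all_order all_algebra.
From mathcomp Require Import all_classical all_reals all_analysis.
Set Implicit Arguments. Unset Strict Implicit. Unset Printing Implicit Defensive.
Import Order.TTheory GRing.Theory Num.Theory.
Local Open Scope ring_scope.

Section Podles.
Variables (R : realType) (A : algType R).

Definition qnum (x : nat) (q : R) : R :=
  if q == 1 then x%:R else (q ^- x - q ^+ x) / (q^-1 - q).

Definition is_star (s : A -> A) : Prop :=
  [/\ involutive s,
      forall x y, s (x + y) = s x + s y,
      forall x y, s (x * y) = s y * s x
    & forall (k : R) x, s (k *: x) = k *: s x].

(* defining relations of O(SU_q(2)) (Woronowicz), u = [[a, -q c^*],[c, a^*]] *)
Definition suq2_rel (s : A -> A) (q : R) (a c : A) : Prop :=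
  [/\ s a * a + s c * c = 1,
      a * s a + q ^+ 2 *: (c * s c) = 1,
      c * s c = s c * c,
      a * c = q *: (c * a)
    & a * s c = q *: (s c * a)].

Definition ufund (s : A -> A) (q : R) (a c : A) : 'M[A]_2 :=
  \matrix_(i < 2, j < 2)
    if (i == 0 :> nat) then (if (j == 0 :> nat) then a else - (q *: s c))
    else (if (j == 0 :> nat) then c else s a).

(* orthonormal basis f_1, f_0, f_{-1} of the spin-1 (q-symmetric) subspace of C^2 (x) C^2:
   f_1 = e_1(x)e_1, f_0 = (q e_1(x)e_2 + e_2(x)e_1)/sqrt(1+q^2), f_{-1} = e_2(x)e_2 *)
Definition fspin1 (q : R) (m : int) (i j : 'I_2) : R :=
  if m == 1 then (if (i == 0 :> nat) && (j == 0 :> nat) then 1 else 0)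
  else if m == 0 then
    (if (i == 0 :> nat) && (j == 1 :> nat) then q / Num.sqrt (1 + q ^+ 2)
     else if (i == 1 :> nat) && (j == 0 :> nat) then (Num.sqrt (1 + q ^+ 2))^-1
     else 0)
  else if m == -1 then (if (i == 1 :> nat) && (j == 1 :> nat) then 1 else 0)
  else 0.

(* matrix coefficients t^1_{m n} (m, n in {-1,0,1}) of the spin-1 unitary corepresentation,
   as the restriction of u (x) u (entries u_ik u_jl) to the spin-1 subspace *)
Definition t1 (s : A -> A) (q : R) (a c : A) (m n : int) : A :=
  \sum_(i < 2) \sum_(j < 2) \sum_(k < 2) \sum_(l < 2)
     (fspin1 q m i j * fspin1 q n k l) *: (ufund s q a c i k * ufund s q a c j l).

Definition adjm (s : A -> A) (X : 'M[A]_2) : 'M[A]_2 := \matrix_(i, j) s (X j i).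

Definition rdiag (x y : R) : 'M[A]_2 :=
  \matrix_(i < 2, j < 2) if i == j then (if (i == 0 :> nat) then x%:A else y%:A) else 0.

(* the frame omega_j, j = 1,2,3 (here indexed by j : 'I_3, paper index j+1):
   omega_j = (-1)^{1-j} [[0, q^{1/2} (t^1_{2-j,-1})^*],[q^{-1/2} (t^1_{2-j,1})^*, 0]] *)
Definition omega (s : A -> A) (q : R) (a c : A) (j : 'I_3) : 'M[A]_2 :=
  let jp : int := (j : nat)%:Z + 1 in
  let sg : R := (-1) ^+ (j : nat) in  (* = (-1)^(1 - jp) *)
  \matrix_(r < 2, k < 2)
    if (r == 0 :> nat) && (k == 1 :> nat) then
      (sg * Num.sqrt q) *: s (t1 s q a c (2 - jp) (-1))
    else if (r == 1 :> nat) && (k == 0 :> nat) then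
      (sg / Num.sqrt q) *: s (t1 s q a c (2 - jp) 1)
    else 0.

Definition inner1 (s : A -> A) (q : R) (X Y : 'M[A]_2) : A :=
  \tr (rdiag q q^-1 *m (adjm s X *m Y)).

(* inner product on Omega^1 (x)_B Omega^1:
   <rho1 (x) rho2, eta1 (x) eta2> = <rho2, <rho1, eta1> eta2>,
   extended additively to (formal) sums of simple tensors *)
Definition inner2 (s : A -> A) (q : R) (X Y : seq ('M[A]_2 * 'M[A]_2)) : A :=
  \sum_(x <- X) \sum_(y <- Y)
     inner1 s q x.2 ((inner1 s q x.1 y.1)%:M *m y.2).

Definition lineG (s : A -> A) (q : R) (a c : A) : seq ('M[A]_2 * 'M[A]_2) :=
  [seq (omega s q a c j, adjm s (omega s q a c j)) | j <- enum 'I_3].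

Definition Ricci (s : A -> A) (q : R) (a c : A) : seq ('M[A]_2 * 'M[A]_2) :=
  [seq (((qnum 2 q / (q ^+ 2 + q ^- 2))%:A : A)%:M *m omega s q a c i,
        rdiag (q ^- 4) (q ^+ 4) *m adjm s (omega s q a c i)) | i <- enum 'I_3].

End Podles.

(* Main.v *)
Require Import Defs.
From HB Require Import structures.
From mathcomp Require Import all_boot all_order all_algebra.
From mathcomp Require Import all_classical all_reals all_analysis.
Import Order.TTheory GRing.Theory Num.Theory.
Import numFieldNormedType.Exports.
Local Open Scope classical_set_scope.
Local Open Scope ring_scope.
From mathcomp Require Import ring lra.
Lemma qnum2 (R : realType) (q : R) : 0 < q -> qnum 2 q = q + q^-1.
Proof.
move=> q0; rewrite /qnum; case: eqP => [->|/eqP q1]; first by rewrite invr1.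
have qn0 : q != 0 by rewrite gt_eqF.
have h : q^-1 - q != 0.
  rewrite (_ : q^-1 - q = (1-q)*(1+q)/q); last by field.
  have h1 : 1 - q != 0 by rewrite subr_eq0 eq_sym.
  have h2 : 1 + q != 0 by rewrite gt_eqF //; lra.
  by rewrite !mulf_neq0 ?invr_eq0.
have -> : q ^- 2 - q ^+ 2 = (q + q^-1) * (q^-1 - q) by field.
by rewrite mulfK.
Qed.

Lemma part2 (R : realType) (q : R) : 0 < q ->
  qnum 2 q / (q ^+ 2 + q ^- 2) * (q ^- 6 + q ^+ 6)
       = qnum 2 q * (1 + (q ^- 2 - q ^+ 2) ^+ 2).
Proof.
move=> q0; have qn0 : q != 0 by rewrite gt_eqF.
have h : q ^+ 2 + q ^- 2 != 0.
  by rewrite gt_eqF // addr_gt0 // ?invr_gt0 exprn_gt0.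
rewrite -mulrA; congr (_ * _).
field; by rewrite qn0 /= gt_eqF // addr_gt0 // exprn_gt0 // mulr_gt0.
Qed.

Lemma cvgXn (R : realType) (T : Type) (F : set_system T) (FF : Filter F)
  (f : T -> R) (l : R) n : f x @[x --> F] --> l -> f x ^+ n @[x --> F] --> l ^+ n.
Proof.
move=> hf; elim: n => [|n IH]; first by rewrite expr0; apply: cvg_cst.
rewrite exprS; under eq_fun do rewrite exprS.
exact: cvgM.
Qed.

Lemma part3 (R : realType) :
  (qnum 2 p / (p ^+ 2 + p ^- 2) * (p ^- 6 + p ^+ 6)) @[p --> (1 : R)^'-] --> (2 : R).
Proof.
set g := fun p : R => (p + p^-1) / (p ^+ 2 + p ^- 2) * (p ^- 6 + p ^+ 6).
apply: (@cvg_trans _ (g p @[p --> (1:R)^'-])).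
  apply: near_eq_cvg; near=> p.
  have p0 : 0 < p by near: p; apply: nbhs_left_gt; exact: ltr01.
  by rewrite /g qnum2.
have h1 : p @[p --> (1:R)^'-] --> (1:R) by apply: cvg_at_left_filter; exact: cvg_id.
have hi : p^-1 @[p --> (1:R)^'-] --> (1:R).
  by rewrite -[X in _ --> X]invr1; apply: cvgV => //; exact: oner_neq0.
have -> : (2:R) = (1 + 1^-1) / (1 ^+ 2 + 1 ^- 2) * (1 ^- 6 + 1 ^+ 6).
  rewrite !expr1n !invr1 -[1 + 1]/2 mulfV ?mul1r // pnatr_eq0.
have hX n : p ^+ n @[p --> (1:R)^'-] --> (1:R) by rewrite -[X in _ --> X](expr1n _ n); exact: cvgXn.
have hXi n : p ^- n @[p --> (1:R)^'-] --> (1:R).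
  by rewrite -[X in _ --> X]invr1; apply: cvgV => //.
have h2 : (1:R) + 1 != 0 by rewrite -[1+1]/(2%:R) pnatr_eq0.
have h2' : (1:R) ^+ 2 + 1 ^- 2 != 0 by rewrite expr1n invr1 -[1+1]/(2%:R) pnatr_eq0.
apply: cvgM; last by rewrite !expr1n invr1; apply: cvgD.
apply: cvgM; first by rewrite invr1; apply: cvgD.
apply: cvgV => //.
by rewrite !expr1n invr1; apply: cvgD.
Unshelve. all: by end_near.
Qed.
Section Main.
Variables (R : realType) (A : algType R) (s : A -> A) (q : R) (a c : A).
Hypotheses (hs : is_star s) (hq0 : 0 < q) (hrel : suq2_rel s q a c).

Lemma sK : involutive s. Proof. by case: hs. Qed.
Lemma sD x y : s (x + y) = s x + s y. Proof. by case: hs. Qed.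
Lemma sM x y : s (x * y) = s y * s x. Proof. by case: hs. Qed.
Lemma sZ (k : R) x : s (k *: x) = k *: s x. Proof. by case: hs. Qed.
Lemma s0 : s 0 = 0.
Proof. by have := sZ 0 0; rewrite !scale0r. Qed.
Lemma sN x : s (- x) = - s x.
Proof. by rewrite -scaleN1r sZ scaleN1r. Qed.

Lemma sum2 (V : zmodType) (F : 'I_2 -> V) : \sum_(i < 2) F i = F ord0 + F ord_max.
Proof. rewrite big_ord_recr /= big_ord_recr big_ord0 /= add0r. congr (F _ + _). exact: val_inj. Qed.


Local Notation cs := (s c).
Local Notation as_ := (s a).
Local Notation sq := (Num.sqrt (1 + q ^+ 2)).
Lemma sq_gt0 : 0 < sq.
Proof. by rewrite sqrtr_gt0 addr_gt0 // exprn_gt0. Qed.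
Lemma sq_neq0 : sq != 0. Proof. by rewrite gt_eqF // sq_gt0. Qed.
Lemma q_neq0 : q != 0. Proof. by rewrite gt_eqF. Qed.
Lemma sqsq : sq * sq = 1 + q ^+ 2.
Proof. by rewrite -expr2 sqr_sqrtr // addr_ge0 // sqr_ge0. Qed.

Lemma R1 : as_ * a + cs * c = 1. Proof. by case: hrel. Qed.
Lemma R2 : a * as_ + q ^+ 2 *: (c * cs) = 1. Proof. by case: hrel. Qed.
Lemma R3 : c * cs = cs * c. Proof. by case: hrel. Qed.
Lemma R4 : a * c = q *: (c * a). Proof. by case: hrel. Qed.
Lemma R5 : a * cs = q *: (cs * a). Proof. by case: hrel. Qed.
Lemma R6 : cs * as_ = q *: (as_ * cs).
Proof. by rewrite -!sM R4 sZ. Qed.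
Lemma R7 : c * as_ = q *: (as_ * c).
Proof. by rewrite -{1}(sK c) -sM R5 sZ sM sK. Qed.
Lemma R4' : c * a = q^-1 *: (a * c).
Proof. by rewrite R4 scalerA mulVf ?q_neq0 // scale1r. Qed.

Ltac simp0 := rewrite ?(mul0r, mulr0, mul1r, mulr1, scale0r, scale1r, add0r, addr0).

Lemma T1E : t1 s q a c 1 (-1) = q ^+ 2 *: (cs * cs).
Proof.
rewrite /t1 !sum2 /fspin1 /ufund !mxE /=; simp0.
by rewrite mulrNN -scalerAl -scalerAr scalerA expr2.
Qed.
Lemma TmE : t1 s q a c (-1) (-1) = as_ * as_.
Proof. by rewrite /t1 !sum2 /fspin1 /ufund !mxE /=; simp0. Qed.
Lemma sqE : q * sq = q * (1 + q ^+ 2) / sq.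
Proof. by rewrite -mulrA -[X in _ * (X / _)]sqsq mulfK ?sq_neq0. Qed.
Lemma T0E : t1 s q a c 0 (-1) = - (q * sq) *: (as_ * cs).
Proof.
rewrite /t1 !sum2 /fspin1 /ufund !mxE /=; simp0.
rewrite mulNr mulrN -!scalerAl -!scalerAr !scalerN R6 !scalerA -[- (_ *: (s a * s c))]scaleNr -[- (_ *: (s a * s c))]scaleNr -scalerDl.
congr (_ *: _); rewrite sqE; field; exact: sq_neq0.
Qed.
Lemma U1E : t1 s q a c 1 1 = a * a.
Proof. by rewrite /t1 !sum2 /fspin1 /ufund !mxE /=; simp0. Qed.
Lemma UmE : t1 s q a c (-1) 1 = c * c.
Proof. by rewrite /t1 !sum2 /fspin1 /ufund !mxE /=; simp0. Qed.
Lemma U0E : t1 s q a c 0 1 = (sq / q) *: (a * c).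
Proof.
rewrite /t1 !sum2 /fspin1 /ufund !mxE /=; simp0.
rewrite R4' !scalerA -scalerDl.
congr (_ *: _). 
have -> : sq / q = (1 + q ^+ 2) / (q * sq).
  by rewrite -[X in _ = X / _]sqsq; field; rewrite sq_neq0 q_neq0.
field; by rewrite sq_neq0 q_neq0.
Qed.

Ltac reify m t :=
  lazymatch t with
  | m => constr:('X : {poly R})
  | 1 => constr:(1 : {poly R})
  | 0 => constr:(0 : {poly R})
  | ?x + ?y => let a := reify m x in let b := reify m y in constr:(a + b)
  | ?x - ?y => let a := reify m x in let b := reify m y in constr:(a - b)
  | - ?x => let a := reify m x in constr:(- a)
  | ?x * ?y => let a := reify m x in let b := reify m y in constr:(a * b)
  | ?k *: ?x => let a := reify m x in constr:(k%:P * a)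
  end.

Ltac hornerE_tac m := repeat (first [rewrite (rmorph1 (horner_alg m)) /= | rewrite (rmorph0 (horner_alg m)) /= | rewrite horner_algC | rewrite horner_algX
  | rewrite (rmorphD (horner_alg m)) /= | rewrite (rmorphB (horner_alg m)) /= | rewrite (rmorphN (horner_alg m)) /= | rewrite (rmorphM (horner_alg m)) /=]); rewrite ?mulr_algl.

Ltac close_poly m0 :=
  let m := fresh "M" in set m := m0;
  lazymatch goal with |- ?l = ?r =>
    let pl := reify m l in let pr := reify m r in
    let EP := fresh "EP" in
    have EP : pl = pr; last first;
    [ transitivity (horner_alg m pl); [ by hornerE_tac m | rewrite EP; by hornerE_tac m ]
    | idtac ]
  end.


Local Notation m1 := (c * cs).
Lemma aas : a * as_ = 1 - q ^+ 2 *: m1. Proof. by rewrite -R2 addrK. Qed.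
Lemma asa : as_ * a = 1 - cs * c. Proof. by rewrite -R1 addrK. Qed.
Lemma Lcc : c * c * (cs * cs) = m1 * m1.
Proof.
rewrite !mulrA; congr (_ * _).
by rewrite -[c * c * cs]mulrA [in LHS]R3 mulrA.
Qed.
Lemma Lcas : c * a * (as_ * cs) = m1 - q ^+ 2 *: (m1 * m1).
Proof.
rewrite mulrA -[c * a * as_]mulrA aas mulrBr mulr1 mulrBl -scalerAr -scalerAl.
by rewrite [c * m1]mulrA -[c * c * cs * cs]mulrA Lcc.
Qed.
Lemma Lamas : a * m1 * as_ = q ^+ 2 *: (m1 * (a * as_)).
Proof.
rewrite mulrA R4 -!scalerAl -[c * a * cs]mulrA R5 -scalerAr -scalerAl scalerA -expr2.
by rewrite !mulrA.
Qed.
Lemma Laa : a * a * (as_ * as_) = (1 - q ^+ 2 *: m1) - q ^+ 2 *: (q ^+ 2 *: (m1 * (1 - q ^+ 2 *: m1))).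
Proof.
rewrite mulrA -[a * a * as_]mulrA aas mulrBr mulr1 mulrBl aas -scalerAr -scalerAl Lamas.
by rewrite aas.
Qed.
Lemma coef1 : - (q * sq) * - (q * sq) = q ^+ 2 * (1 + q ^+ 2).
Proof. by rewrite mulrNN mulrACA sqsq expr2. Qed.

Lemma unitT : s (t1 s q a c 1 (-1)) * t1 s q a c 1 (-1) + s (t1 s q a c 0 (-1)) * t1 s q a c 0 (-1)
  + s (t1 s q a c (-1) (-1)) * t1 s q a c (-1) (-1) = 1.
Proof.
rewrite T1E T0E TmE !sZ !sM !sK -!scalerAl -!scalerAr !scalerA coef1 Lcc Lcas Laa.
close_poly (c * s c); ring.
Qed.

Lemma acx x : a * (c * x) = q *: (c * (a * x)).
Proof. by rewrite mulrA R4 -scalerAl mulrA. Qed.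
Lemma Lcaac : c * a * (a * c) = q ^+ 2 *: (c * c * (a * a)).
Proof.
rewrite -!mulrA R4 -!scalerAr acx -!scalerAr scalerA -expr2.
by rewrite !mulrA.
Qed.
Lemma Laacc : a * a * (c * c) = q ^+ 4 *: (c * c * (a * a)).
Proof.
rewrite -!mulrA acx -?scalerAr acx -?scalerAr R4 -?scalerAr acx -?scalerAr !scalerA.
by congr (_ *: _); ring.
Qed.
Lemma coef2 : - (q * sq) * (sq / q) = - (1 + q ^+ 2).
Proof. rewrite -[X in _ = - X]sqsq; field; exact: q_neq0. Qed.
Lemma unitX : s (t1 s q a c 1 (-1)) * t1 s q a c 1 1 + s (t1 s q a c 0 (-1)) * t1 s q a c 0 1
  + s (t1 s q a c (-1) (-1)) * t1 s q a c (-1) 1 = 0.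
Proof.
rewrite T1E T0E TmE U1E U0E UmE !sZ !sM !sK -!scalerAl -!scalerAr !scalerA coef2 Lcaac Laacc.
close_poly (c * c * (a * a)); ring.
Qed.

Local Notation p1 := (cs * c).
Lemma R6' : as_ * cs = q^-1 *: (cs * as_).
Proof. by rewrite R6 scalerA mulVf ?q_neq0 // scale1r. Qed.
Lemma R7' : as_ * c = q^-1 *: (c * as_).
Proof. by rewrite R7 scalerA mulVf ?q_neq0 // scale1r. Qed.
Lemma Lcc2 : cs * cs * (c * c) = p1 * p1.
Proof.
rewrite !mulrA; congr (_ * _).
by rewrite -[cs * cs * c]mulrA -[in LHS]R3 mulrA.
Qed.
Lemma Lcsasac : cs * as_ * (a * c) = p1 - p1 * p1.
Proof.
rewrite mulrA -[cs * as_ * a]mulrA asa mulrBr mulr1 mulrBl.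
by rewrite [cs * p1]mulrA -[cs * cs * c * c]mulrA Lcc2.
Qed.
Lemma Lasasaa : as_ * as_ * (a * a) = (1 - p1) - q^-1 *: (q^-1 *: (p1 * (1 - p1))).
Proof.
rewrite mulrA -[as_ * as_ * a]mulrA asa mulrBr mulr1 mulrBl asa.
rewrite [as_ * p1]mulrA R6' -!scalerAl -[cs * as_ * c]mulrA R7' -scalerAr -!scalerAl.
by rewrite [cs * (c * as_)]mulrA -[cs * c * as_ * a]mulrA asa.
Qed.
Lemma coef3 : (sq / q) * (sq / q) = q^-1 * q^-1 + 1.
Proof. rewrite mulrACA sqsq; field; exact: q_neq0. Qed.
Lemma unitU : s (t1 s q a c 1 1) * t1 s q a c 1 1 + s (t1 s q a c 0 1) * t1 s q a c 0 1
  + s (t1 s q a c (-1) 1) * t1 s q a c (-1) 1 = 1.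
Proof.
rewrite U1E U0E UmE !sZ !sM -!scalerAl -!scalerAr !scalerA coef3 Lcc2 Lcsasac Lasasaa.
close_poly (s c * c); ring.
Qed.

Lemma inner1E (X Y : 'M[A]_2) : inner1 s q X Y =
  q *: (s (X ord0 ord0) * Y ord0 ord0 + s (X ord_max ord0) * Y ord_max ord0) +
  q^-1 *: (s (X ord0 ord_max) * Y ord0 ord_max + s (X ord_max ord_max) * Y ord_max ord_max).
Proof.
rewrite /inner1 /mxtrace sum2 !mxE !sum2 !mxE /= !mul0r !add0r !addr0 !mulr_algl.
by rewrite !sum2 /adjm !mxE.
Qed.

Definition jm (j : 'I_3) : int := 2 - ((j : nat)%:Z + 1).
Local Notation xx j := (omega s q a c j ord0 ord_max).
Local Notation yy j := (omega s q a c j ord_max ord0).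
Lemma om00 j : omega s q a c j ord0 ord0 = 0. Proof. by rewrite /omega mxE. Qed.
Lemma om11 j : omega s q a c j ord_max ord_max = 0. Proof. by rewrite /omega mxE. Qed.
Lemma xE j : xx j = ((-1) ^+ j * Num.sqrt q) *: s (t1 s q a c (jm j) (-1)).
Proof. by rewrite /omega mxE. Qed.
Lemma yE j : yy j = ((-1) ^+ j / Num.sqrt q) *: s (t1 s q a c (jm j) 1).
Proof. by rewrite /omega mxE. Qed.

Lemma sAl (k : R) (u v : A) : k *: (u * v) = k *: u * v. Proof. exact: scalerAl. Qed.
Lemma sAr (k : R) (u v : A) : k *: (u * v) = u * (k *: v). Proof. exact: scalerAr. Qed.
Lemma sA (k l : R) (u : A) : k *: (l *: u) = (k * l) *: u. Proof. exact: scalerA. Qed.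
Lemma mA (u v w : A) : u * (v * w) = u * v * w. Proof. exact: mulrA. Qed.
Lemma mDl (u v w : A) : (u + v) * w = u * w + v * w. Proof. exact: mulrDl. Qed.
Lemma mDr (u v w : A) : u * (v + w) = u * v + u * w. Proof. exact: mulrDr. Qed.
Lemma sDr (k : R) (u v : A) : k *: (u + v) = k *: u + k *: v. Proof. exact: scalerDr. Qed.
Lemma mal (k : R) (u : A) : k%:A * u = k *: u. Proof. exact: mulr_algl. Qed.
Lemma Egen (K : R) (X Y : 'M[A]_2) :
  X ord0 ord0 = 0 -> X ord_max ord_max = 0 -> Y ord0 ord0 = 0 -> Y ord_max ord_max = 0 ->
  inner1 s q (adjm s X) ((inner1 s q X ((K%:A : A)%:M *m Y))%:M *m
       (rdiag A (q ^- 4) (q ^+ 4) *m adjm s Y)) =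
  (K * q ^+ 6) *: ((X ord0 ord_max * s (X ord_max ord0)) * (Y ord_max ord0 * s (Y ord0 ord_max)))
  + (K * q ^+ 4) *: ((X ord0 ord_max * s (X ord0 ord_max)) * (Y ord0 ord_max * s (Y ord0 ord_max)))
  + (K / q ^+ 4) *: ((X ord_max ord0 * s (X ord_max ord0)) * (Y ord_max ord0 * s (Y ord_max ord0)))
  + (K / q ^+ 6) *: ((X ord_max ord0 * s (X ord0 ord_max)) * (Y ord0 ord_max * s (Y ord_max ord0))).
Proof.
move=> X00 X11 Y00 Y11.
rewrite !inner1E !mul_scalar_mx /adjm !mxE !sum2 !mxE /= X00 X11 Y00 Y11 !s0 !sK ?mul0r ?mulr0 ?add0r ?addr0 ?mul0r ?mulr0 ?add0r ?addr0.
set x := X ord0 ord_max; set y := X ord_max ord0; set x' := Y ord0 ord_max; set y' := Y ord_max ord0.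
rewrite !mal !mDl !mDr -!sAl -!sAr !sDr !sA !mA.
do 3 rewrite -?sAr -?sAl ?sA ?mA.
rewrite !addrA; congr (_ *: _ + _ *: _ + _ *: _ + _ *: _); field; rewrite ?q_neq0 //.
Qed.

Definition Mf j := xx j * s (yy j).
Definition Nf j := yy j * s (xx j).
Definition Pf j := xx j * s (xx j).
Definition Sf j := yy j * s (yy j).

Lemma Eji (K : R) j i :
  inner1 s q (adjm s (omega s q a c j))
    ((inner1 s q (omega s q a c j) ((K%:A : A)%:M *m omega s q a c i))%:M *m
       (rdiag A (q ^- 4) (q ^+ 4) *m adjm s (omega s q a c i))) =
  (K * q ^+ 6) *: (Mf j * Nf i) + (K * q ^+ 4) *: (Pf j * Pf i)
  + (K / q ^+ 4) *: (Sf j * Sf i) + (K / q ^+ 6) *: (Nf j * Mf i).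
Proof. exact: Egen (om00 j) (om11 j) (om00 i) (om11 i). Qed.

Lemma dsum (k : R) (u v : 'I_3 -> A) :
  \sum_(j <- enum 'I_3) \sum_(i <- enum 'I_3) k *: (u j * v i)
  = k *: ((\sum_(j <- enum 'I_3) u j) * (\sum_(i <- enum 'I_3) v i)).
Proof.
rewrite mulr_suml scaler_sumr; apply: eq_bigr => j _.
by rewrite mulr_sumr scaler_sumr.
Qed.

Lemma sum3 (F : 'I_3 -> A) : \sum_(j <- enum 'I_3) F j
  = F (@Ordinal 3 0 isT) + F (@Ordinal 3 1 isT) + F (@Ordinal 3 2 isT).
Proof.
have -> : enum 'I_3 = [:: @Ordinal 3 0 isT; @Ordinal 3 1 isT; @Ordinal 3 2 isT].
  by apply: (inj_map val_inj); rewrite val_enum_ord.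
by rewrite !big_cons big_nil addr0 addrA.
Qed.
Lemma jm0 : jm (@Ordinal 3 0 isT) = 1. Proof. by []. Qed.
Lemma jm1 : jm (@Ordinal 3 1 isT) = 0. Proof. by []. Qed.
Lemma jm2 : jm (@Ordinal 3 2 isT) = -1. Proof. by []. Qed.

Lemma sg2 (j : nat) : (-1) ^+ j * (-1) ^+ j = 1 :> R.
Proof. by rewrite -exprD addnn -mul2n exprM sqrrN !expr1n. Qed.
Lemma sqq : Num.sqrt q * Num.sqrt q = q.
Proof. by rewrite -expr2 sqr_sqrtr // ltW. Qed.
Lemma sqq_neq0 : Num.sqrt q != 0.
Proof. by rewrite gt_eqF // sqrtr_gt0. Qed.

Lemma sumP : \sum_(j <- enum 'I_3) Pf j = q%:A.
Proof.
rewrite (eq_bigr (fun j => q *: (s (t1 s q a c (jm j) (-1)) * t1 s q a c (jm j) (-1)))); last first.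
  move=> j _; rewrite /Pf xE sZ sK -sAl -sAr sA; congr (_ *: _).
  by rewrite mulrACA sg2 sqq mul1r.
by rewrite -scaler_sumr sum3 jm0 jm1 jm2 unitT.
Qed.
Lemma sumS : \sum_(j <- enum 'I_3) Sf j = q^-1%:A.
Proof.
rewrite (eq_bigr (fun j => q^-1 *: (s (t1 s q a c (jm j) 1) * t1 s q a c (jm j) 1))); last first.
  move=> j _; rewrite /Sf yE sZ sK -sAl -sAr sA; congr (_ *: _).
  by rewrite mulrACA sg2 -invfM sqq mul1r.
by rewrite -scaler_sumr sum3 jm0 jm1 jm2 unitU.
Qed.
Lemma sumM : \sum_(j <- enum 'I_3) Mf j = 0.
Proof.
rewrite (eq_bigr (fun j => (s (t1 s q a c (jm j) (-1)) * t1 s q a c (jm j) 1))); last first.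
  move=> j _; rewrite /Mf xE yE sZ sK -sAl -sAr sA.
  by rewrite mulrACA sg2 mulfV ?sqq_neq0 // mul1r scale1r.
by rewrite sum3 jm0 jm1 jm2 unitX.
Qed.
Lemma sumN : \sum_(j <- enum 'I_3) Nf j = 0.
Proof.
rewrite (eq_bigr (fun j => (s (t1 s q a c (jm j) 1) * t1 s q a c (jm j) (-1)))); last first.
  move=> j _; rewrite /Nf xE yE sZ sK -sAl -sAr sA.
  by rewrite mulrACA sg2 mulVf ?sqq_neq0 // mul1r scale1r.
rewrite sum3 jm0 jm1 jm2.
have := congr1 s unitX; rewrite s0 !sD !sM !sK => <-.
by [].
Qed.

Lemma main1 : inner2 s q (lineG s q a c) (Ricci s q a c)
    = (qnum 2 q / (q ^+ 2 + q ^- 2) * (q ^- 6 + q ^+ 6)) %:A.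
Proof.
rewrite /inner2 /lineG /Ricci big_map.
under eq_bigr => j _ do rewrite big_map /=.
set K := qnum 2 q / (q ^+ 2 + q ^- 2).
under eq_bigr => j _ do under eq_bigr => i _ do rewrite Eji.
under eq_bigr => j _ do rewrite !big_split /=.
rewrite !big_split /= !dsum sumP sumS sumM sumN.
rewrite !mul0r !scaler0 add0r addr0 !mal /GRing.in_alg !sA -scalerDl.
congr (_ *: _); field; rewrite ?q_neq0 //.
Qed.
End Main.

Theorem mainTheorem8 (R : realType) (A : algType R) (s : A -> A) (q : R) (a c : A)
  (hs : is_star s) (hq0 : 0 < q) (hq1 : q <= 1) (hrel : suq2_rel s q a c) :
  inner2 s q (lineG s q a c) (Ricci s q a c)
    = (qnum 2 q / (q ^+ 2 + q ^- 2) * (q ^- 6 + q ^+ 6)) %:A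
  /\ qnum 2 q / (q ^+ 2 + q ^- 2) * (q ^- 6 + q ^+ 6)
       = qnum 2 q * (1 + (q ^- 2 - q ^+ 2) ^+ 2)
  /\ (qnum 2 p / (p ^+ 2 + p ^- 2) * (p ^- 6 + p ^+ 6)) @[p --> (1 : R)^'-] --> (2 : R).
Proof.
split; first exact: (@main1 R A s q a c hs hq0 hrel).

split; first exact: part2.
exact: part3.
Qed.
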